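(* Let $p$ be a prime and $q=p^n$ with $n$ odd and $q\equiv 1 \pmod 3$; let $\xi\in\mathbb{F}_p^\times$ be a nonsquare in $\mathbb{F}_p$ (hence, $n$ being odd, also a nonsquare in $\mathbb{F}_q$). Let $\delta\in\mathbb{F}_q$ be a cubic nonresidue, and let $\mathbb{F}_q(\delta^{1/3})$ be the cubic extension with $\mathbb{F}_q$-basis $\{1,\delta^{1/3},\delta^{2/3}\}$; write $\alpha=\alpha_1+\alpha_2\delta^{1/3}+\alpha_3\delta^{2/3}$ with $\alpha_i\in\mathbb{F}_q$. Let $\mathbb{H}_q=\{(\alpha,\beta)\in \mathbb{F}_q(\delta^{1/3})^2 : \alpha_2\beta_3-\alpha_3\beta_2\neq 0\}$ with the action of $\mathrm{GL}_3(\mathbb{F}_q)$ given by \[ \begin{bmatrix} a & b & c\\ d & e & f\\ r & s & t \end{bmatrix} (\alpha,\beta) = \left(\frac{a\alpha+b\beta+c}{r\alpha+s\beta+t}, \frac{d\alpha+e\beta+f}{r\alpha+s\beta+t} \right). \] Let \[H=\left\{\begin{bmatrix} a & b\xi & 0\\ b & a & 0\\ 0 & 0 & c\end{bmatrix} : a,b,c\in\mathbb{F}_q,\ c(a^2-b^2\xi)\neq 0\right\}.\] Then \[\left\{\left(x+u\delta^{1/3}+v\delta^{2/3},\,y+\delta^{1/3}\right) : v\in\mathbb{F}_q^\times,\ x,y,u\in\mathbb{F}_q\right\}\] is a fundamental domain for the action of $H$ on $\mathbb{H}_q$.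
   Context: A fundamental domain for the action of a subgroup $H$ on $\mathbb{H}_q$ is a subset of $\mathbb{H}_q$ containing exactly one element of each $H$-orbit. A cubic nonresidue is an element of $\mathbb{F}_q^\times$ that is not a cube in $\mathbb{F}_q$. The group $H$ is the centralizer in $\mathrm{GL}_3(\mathbb{F}_q)$ of a matrix $\begin{bmatrix}k&l\xi&0\\l&k&0\\0&0&m\end{bmatrix}$ with $k\in\mathbb{F}_p$, $l,m\in\mathbb{F}_p^\times$. *)

(* Defs.v *)
From mathcomp Require Import all_boot all_order all_algebra.
Set Implicit Arguments. Unset Strict Implicit. Unset Printing Implicit Defensive.
Import GRing.Theory.
Local Open Scope ring_scope.

(* The cubic extension F(delta^(1/3)) is modelled concretely as triples
   (x1, x2, x3) standing for x1 + x2 delta^(1/3) + x3 delta^(2/3). *)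
Section Cubic.
Variable F : finFieldType.
Variable delta : F.

Definition cub := (F * F * F)%type.
Definition cmk (x1 x2 x3 : F) : cub := (x1, x2, x3).
Definition c1 (x : cub) : F := x.1.1.
Definition c2 (x : cub) : F := x.1.2.
Definition c3 (x : cub) : F := x.2.

Definition cconst (a : F) : cub := cmk a 0 0.
Definition cadd (x y : cub) : cub := cmk (c1 x + c1 y) (c2 x + c2 y) (c3 x + c3 y).
Definition cscale (a : F) (x : cub) : cub := cmk (a * c1 x) (a * c2 x) (a * c3 x).
(* multiplication using (delta^(1/3))^3 = delta *)
Definition cmul (x y : cub) : cub :=
  cmk (c1 x * c1 y + delta * (c2 x * c3 y + c3 x * c2 y))
      (c1 x * c2 y + c2 x * c1 y + delta * (c3 x * c3 y))
      (c1 x * c3 y + c2 x * c2 y + c3 x * c1 y).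
(* multiplicative inverse (the unique y with x*y = 1 when delta is a cubic
   nonresidue, and 0 if none exists) *)
Definition cinv (x : cub) : cub :=
  if [pick y : cub | cmul x y == cconst 1] is Some y then y else cconst 0.

Definition Hq (z : cub * cub) : Prop :=
  c2 z.1 * c3 z.2 - c3 z.1 * c2 z.2 != 0.

Definition mact (M : 'M[F]_3) (z : cub * cub) : cub * cub :=
  let e i j := M (inord i) (inord j) in
  let al := z.1 in let be := z.2 in
  let den := cadd (cadd (cscale (e 2 0)%N al) (cscale (e 2 1)%N be)) (cconst (e 2 2)%N) in
  let n1 := cadd (cadd (cscale (e 0 0)%N al) (cscale (e 0 1)%N be)) (cconst (e 0 2)%N) in
  let n2 := cadd (cadd (cscale (e 1 0)%N al) (cscale (e 1 1)%N be)) (cconst (e 1 2)%N) in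
  (cmul n1 (cinv den), cmul n2 (cinv den)).

End Cubic.

Definition hmat (F : finFieldType) (xi a b c : F) : 'M[F]_3 :=
  \matrix_(i < 3, j < 3)
    match val i, val j with
    | 0%N, 0%N => a | 0%N, 1%N => b * xi | 1%N, 0%N => b
    | 1%N, 1%N => a | 2%N, 2%N => c
    | _, _ => 0
    end.

Definition inH (F : finFieldType) (xi : F) (M : 'M[F]_3) : Prop :=
  exists a b c : F, c * (a ^+ 2 - b ^+ 2 * xi) != 0 /\ M = hmat xi a b c.

Definition fundamental_domain (F : finFieldType) (delta : F)
    (G : 'M[F]_3 -> Prop) (X D : cub F * cub F -> Prop) : Prop :=
  (forall z, D z -> X z) /\
  (forall z, X z -> exists! w, D w /\ exists M, G M /\ w = mact delta M z).

Definition Dom (F : finFieldType) (z : cub F * cub F) : Prop :=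
  exists x y u v : F, v != 0 /\ z = (cmk x u v, cmk y 1 0).

(* Main.v *)
Require Import Defs.
From mathcomp Require Import all_boot all_order all_algebra all_field.
From mathcomp Require Import ring.
Import GRing.Theory.
Local Open Scope ring_scope.

Lemma cinv_const (F : finFieldType) (delta : F) (x : cub F) :
  c2 x = 0 -> c3 x = 0 -> c1 x != 0 -> cinv delta x = cconst (c1 x)^-1.
Proof.
case: x => [[x1 x2] x3]; rewrite /c1 /c2 /c3 /= => -> -> nz.
rewrite /cinv; case: pickP => [[[y1 y2] y3]|].
  rewrite /cmul /cconst /cmk /c1 /c2 /c3 /= => /eqP[e1 e2 e3].
  have h2 : y2 = 0 by apply/eqP; move: e2; rewrite ?mul0r ?mulr0 ?addr0 => /eqP; rewrite mulf_eq0 (negbTE nz).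
  have h3 : y3 = 0 by apply/eqP; move: e3; rewrite ?mul0r ?mulr0 ?addr0 => /eqP; rewrite mulf_eq0 (negbTE nz).
  subst; congr (_, _, _); move: e1; rewrite ?mul0r ?mulr0 ?addr0 => /(congr1 (fun t => x1^-1 * t)).
  by rewrite mulr0 addr0 mulKf // mulr1.
move=> /(_ (cconst x1^-1)); rewrite /cmul /cconst /cmk /c1 /c2 /c3 /=.
by rewrite !(mul0r, mulr0, addr0) mulfV // eqxx.
Qed.

Lemma mact_hmat (F : finFieldType) (delta xi a b c : F) (z : cub F * cub F) :
  c != 0 ->
  mact delta (hmat xi a b c) z =
  (cmk (a/c * c1 z.1 + b/c * xi * c1 z.2) (a/c * c2 z.1 + b/c * xi * c2 z.2)
       (a/c * c3 z.1 + b/c * xi * c3 z.2),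
   cmk (b/c * c1 z.1 + a/c * c1 z.2) (b/c * c2 z.1 + a/c * c2 z.2)
       (b/c * c3 z.1 + a/c * c3 z.2)).
Proof.
move=> cnz; case: z => [[[x1 x2] x3] [[y1 y2] y3]].
rewrite /mact /hmat !mxE /= !inordK //=.
rewrite cinv_const /cadd /cscale /cconst /cmk /c1 /c2 /c3 /=; last first.
- by rewrite !mul0r !add0r.
- by rewrite !mul0r !addr0.
- by rewrite !mul0r !addr0.
rewrite /cmul /c1 /c2 /c3 /=.
congr (_, _, _, (_, _, _)); rewrite !mul0r ?add0r; field; done.
Qed.

Lemma pow2_mod3 n : odd n -> (2 ^ n %% 3 = 2)%N.
Proof.
move=> on; rewrite -(odd_double_half n) on add1n expnS -mul2n expnM.
rewrite -modnMmr -modnXm. have -> : (2 ^ 2 %% 3 = 1)%N by []. by rewrite exp1n.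
Qed.

Lemma nonsq (F : finFieldType) (p n : nat) (xi : F) :
  prime p -> odd n -> #|F| = (p ^ n)%N -> (#|F| %% 3 = 1)%N ->
  xi ^+ p = xi -> xi != 0 -> ~ (exists y : F, y ^+ p = y /\ y ^+ 2 = xi) ->
  forall y : F, y ^+ 2 != xi.
Proof.
move=> pp on cF c3 xip xi0 nsq y; apply/negP => /eqP y2.
have op : odd p.
  case: (even_prime pp) => [p2|//]; move: c3; rewrite cF p2 pow2_mod3 //.
have pc : p \in [pchar F] by apply: (card_finPcharP cF).
have two0 : (2%:R : F) != 0.
  apply/negP => /eqP t0.
  have : (p%:R : F) = 1.
    by rewrite -(odd_double_half p) op natrD -muln2 natrM t0 mulr0 addr0.
  by move=> h; have := pcharf0 pc; rewrite h => /eqP; rewrite oner_eq0.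
have yp : y ^+ p = - y.
  have : (y ^+ p - y) * (y ^+ p + y) = 0.
    by rewrite -subr_sqr -exprM mulnC exprM y2 xip subrr.
  move/eqP; rewrite mulf_eq0 => /orP[|]; first by rewrite subr_eq0 => /eqP h; case: nsq; exists y.
  by rewrite addr_eq0 => /eqP.
have yk : forall k, y ^+ (p ^ k) = (-1) ^+ k * y.
  elim=> [|k IH]; first by rewrite expn0 expr1 expr0 mul1r.
  rewrite expnSr exprM IH exprMn yp -exprM -(signr_odd _ (k * p)) oddM op andbT signr_odd exprS; ring.
have : y ^+ #|F| = y by apply: expf_card.
rewrite cF yk -signr_odd on expr1 => /eqP.
move=> h; have : y *+ 2 = 0.
  by rewrite mulr2n -{1}(eqP h); ring.
rewrite -mulr_natr => /eqP; rewrite mulf_eq0 (negbTE two0) orbF => /eqP y0.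
by move: xi0; rewrite -y2 y0 expr0n eqxx.
Qed.

Theorem proposition6p1 (F : finFieldType) (p n : nat) (xi delta : F) :
  prime p -> odd n -> #|F| = (p ^ n)%N -> (#|F| %% 3 = 1)%N ->
  xi ^+ p = xi -> xi != 0 -> ~ (exists y : F, y ^+ p = y /\ y ^+ 2 = xi) ->
  delta != 0 -> ~ (exists y : F, y ^+ 3 = delta) ->
  fundamental_domain delta (inH xi) (@Hq F) (@Dom F).
Proof.
move=> pp on cF c3' xip xi0 nsq _ _.
have ns := @nonsq F p n xi pp on cF c3' xip xi0 nsq.
split.
  move=> z [x [y [u [v [v0 ->]]]]]; rewrite /Hq /c2 /c3 /=.
  by rewrite mulr0 mulr1 sub0r oppr_eq0.
move=> [[[a1 a2] a3] [[b1 b2] b3]]; rewrite /Hq /c2 /c3 /= => Dnz.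
have N : a3 ^+ 2 - b3 ^+ 2 * xi != 0.
  have [b30|b3n] := eqVneq b3 0.
    rewrite b30 expr0n mul0r subr0 expf_neq0 //.
    by apply: contraNneq Dnz => ->; rewrite b30 !mul0r mulr0 subrr.
  apply/negP => /eqP h; move: (ns (a3 / b3)) => /negP; apply.
  rewrite expr_div_n; apply/eqP; apply: (mulIf (expf_neq0 2 b3n)).
  by rewrite divfK ?expf_neq0 //; apply/eqP; rewrite -subr_eq0 mulrC h.
have c1nz : (1 : F) != 0 by exact: oner_neq0.
exists (mact delta (hmat xi (- a3 / (a2 * b3 - a3 * b2)) (b3 / (a2 * b3 - a3 * b2)) 1)
   ((a1, a2, a3), (b1, b2, b3))).
rewrite mact_hmat // !divr1 /c1 /c2 /c3 /=.
split.
  split.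
    eexists; eexists; eexists; exists
      (- a3 / (a2 * b3 - a3 * b2) * a3 + b3 / (a2 * b3 - a3 * b2) * xi * b3).
    split.
      have -> : - a3 / (a2 * b3 - a3 * b2) * a3 + b3 / (a2 * b3 - a3 * b2) * xi * b3
         = - (a3 ^+ 2 - b3 ^+ 2 * xi) / (a2 * b3 - a3 * b2) by field.
      by rewrite mulf_neq0 ?oppr_eq0 ?invr_eq0.
    rewrite /cmk; congr (_, (_, _, _)); field; done.
  exists (hmat xi (- a3 / (a2 * b3 - a3 * b2)) (b3 / (a2 * b3 - a3 * b2)) 1); split; last by rewrite mact_hmat // !divr1.
  do 3 eexists; split; last by reflexivity.
  have -> : 1 * ((- a3 / (a2 * b3 - a3 * b2)) ^+ 2 - (b3 / (a2 * b3 - a3 * b2)) ^+ 2 * xi)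
     = (a3 ^+ 2 - b3 ^+ 2 * xi) / (a2 * b3 - a3 * b2) ^+ 2 by field.
  by rewrite mulf_neq0 ?invr_eq0 ?expf_neq0.
move=> w [[x [y [u [v [v0 ->]]]]] [M [[a [b [c [nz ->]]]] E]]].
have cnz : c != 0 by move: nz; rewrite mulf_eq0 negb_or => /andP[].
move: E; rewrite mact_hmat // /c1 /c2 /c3 /cmk /= => -[ex eu ev ey e1 e0].
have hA : a / c = - a3 / (a2 * b3 - a3 * b2).
  apply: (mulIf Dnz); rewrite divfK //.
  transitivity (a2 * (b / c * a3 + a / c * b3) - a3 * (b / c * a2 + a / c * b2)); first by ring.
  by rewrite -e0 -e1; ring.
have hB : b / c = b3 / (a2 * b3 - a3 * b2).
  apply: (mulIf Dnz); rewrite divfK //.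
  transitivity (b3 * (b / c * a2 + a / c * b2) - b2 * (b / c * a3 + a / c * b3)); first by ring.
  by rewrite -e0 -e1; ring.
rewrite ex eu ev ey hA hB /cmk /c1 /c2 /c3 /=.
congr (_, (_, _, _)); field; done.
Qed.
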